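(* Let $f : 2^V \to \mathbb{Z}_{\ge 0}$ be a connectivity function. If $W \subseteq V$ is a set with $f(W) > 2\,\mathtt{bw}(f)$, then there exists a tripartition $(C_1,C_2,C_3)$ of $V$ (parts may be empty) such that for each $i\in\{1,2,3\}$: $f(C_i) < f(W)/2$, $f(C_i\cap W) < f(W)$, and $f(C_i \cap (V\setminus W)) < f(W)$.
   Context: $V$ is a finite set. A function $f:2^V\to\mathbb{Z}_{\ge 0}$ is a connectivity function if $f(\emptyset)=0$, $f(X)=f(V\setminus X)$ for all $X\subseteq V$, and $f(X\cup Y)+f(X\cap Y)\le f(X)+f(Y)$ for all $X,Y\subseteq V$. A branch decomposition of $f$ is a pair $(T,L)$ where $T$ is a tree whose nodes have degree 1 or 3 and $L$ is a bijection from $V$ to the leaves of $T$ (such exist only when $|V|\ge 2$). Each edge $e$ of $T$ induces, via the components of $T-e$, a bipartition $(X,V\setminus X)$ of $V$, and its width is $f(X)$. The width of $(T,L)$ is the maximum edge width, and $\mathtt{bw}(f)$, the branchwidth of $f$, is the minimum width of a branch decomposition of $f$. A tripartition of $V$ is an ordered triple of pairwise disjoint sets (possibly empty) whose union is $V$. *)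

(* Defs.v *)
From mathcomp Require Import all_boot.
Set Implicit Arguments. Unset Strict Implicit. Unset Printing Implicit Defensive.

Definition connectivity_function (V : finType) (f : {set V} -> nat) : Prop :=
  [/\ f set0 = 0%N,
      (forall X : {set V}, f X = f (~: X)) &
      (forall X Y : {set V}, f (X :|: Y) + f (X :&: Y) <= f X + f Y)%N].

Definition del_edge (N : finType) (e : rel N) (u v : N) : rel N :=
  fun a b => e a b && ~~ (((a == u) && (b == v)) || ((a == v) && (b == u))).

(* A finite tree: symmetric irreflexive adjacency relation, connected, acyclic
   (every edge is a bridge, i.e. no edge lies on a cycle). *)
Definition is_tree (N : finType) (e : rel N) : Prop :=
  [/\ symmetric e, irreflexive e,
      (forall x y : N, connect e x y) &
      (forall u v : N, e u v -> ~~ connect (del_edge e u v) u v)].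

Definition degree (N : finType) (e : rel N) (x : N) : nat := #|[set y | e x y]|.

Definition branch_decomposition (V N : finType) (e : rel N) (L : V -> N) : Prop :=
  [/\ is_tree e,
      (forall x : N, degree e x = 1%N \/ degree e x = 3%N),
      injective L &
      (forall x : N, degree e x = 1%N <-> exists v : V, L v = x)].

Definition edge_side (V N : finType) (e : rel N) (L : V -> N) (u v : N) : {set V} :=
  [set x | connect (del_edge e u v) u (L x)].

Definition bd_width (V N : finType) (f : {set V} -> nat) (e : rel N) (L : V -> N) : nat :=
  \max_(p : N * N | e p.1 p.2) f (edge_side e L p.1 p.2).

Definition is_branchwidth (V : finType) (f : {set V} -> nat) (k : nat) : Prop :=
  (exists (N : finType) (e : rel N) (L : V -> N),
      branch_decomposition e L /\ bd_width f e L = k) /\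
  (forall (N : finType) (e : rel N) (L : V -> N),
      branch_decomposition e L -> (k <= bd_width f e L)%N).

(* Main.v *)
Require Import Defs.
From mathcomp Require Import all_boot.
From mathcomp Require Import zify.

Lemma connect_ind' (T : finType) (r : rel T) (x : T) (P : T -> Prop) :
  P x -> (forall y z, connect r x y -> P y -> r y z -> P z) ->
  forall y, connect r x y -> P y.
Proof.
move=> Px IH y /connectP [p pth ->].
elim/last_ind: p pth => [//|p z IHp].
rewrite rcons_path => /andP[pp rz]; rewrite last_rcons.
apply: (IH (last x p)) => //; last exact: IHp.
by apply/connectP; exists p.
Qed.

Lemma del_edgeC (N : finType) (e : rel N) u v : del_edge e u v =2 del_edge e v u.
Proof. by move=> a b; rewrite /del_edge orbC. Qed.

Lemma del_sym (N : finType) (e : rel N) u v : symmetric e -> symmetric (del_edge e u v).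
Proof.
move=> se a b; rewrite /del_edge se; congr (_ && ~~ _).
by rewrite (andbC (b == u)) (andbC (b == v)) orbC.
Qed.

Lemma disj_of (V : finType) (A B : {set V}) :
  (forall x, x \in A -> x \in B -> False) -> [disjoint A & B].
Proof.
move=> H; rewrite -setI_eq0; apply/eqP/setP => x; rewrite !inE.
apply/negbTE/negP => /andP[]; exact: H.
Qed.

Section Tree.
Variables (N : finType) (e : rel N).
Hypothesis Ht : is_tree e.

Notation D u v := (del_edge e u v).

Lemma T1 u v z : e u v -> connect (D u v) u z || connect (D u v) v z.
Proof.
case: Ht => se ie ce ae euv.
apply: (@connect_ind' _ (e) u (fun z => connect (D u v) u z || connect (D u v) v z)) (ce u z).
  by rewrite connect0.
move=> y z' _ IH eyz.
case: (boolP ((y == u) && (z' == v) || (y == v) && (z' == u))).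
  by case/orP => /andP[_ /eqP ->]; rewrite connect0 ?orbT.
move=> H; have Dyz : D u v y z' by rewrite /del_edge eyz H.
by case/orP: IH => c; apply/orP; [left|right]; apply: connect_trans c (connect1 Dyz).
Qed.

Lemma T2 u v z : e u v -> connect (D u v) u z -> connect (D u v) v z -> False.
Proof.
case: Ht => se ie ce ae euv c1 c2.
have cs := sym_connect_sym (del_sym N e u v se).
rewrite cs in c2.
by move: (ae u v euv); rewrite (connect_trans c1 c2).
Qed.

Lemma T3 x y1 y2 w : e x y1 -> e x y2 -> y1 != y2 ->
  connect (D y1 x) y1 w -> connect (D x y2) x w.
Proof.
case: Ht => se ie ce ae exy1 exy2 ny.
have xy2 : x != y2 by apply/eqP => E; move: (ie x); rewrite {2}E exy2.
apply: (@connect_ind' _ (D y1 x) y1 (fun w => connect (D x y2) x w)).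
  apply: connect1; rewrite /del_edge exy1 eqxx /= (negbTE ny) /=.
  by rewrite (negbTE xy2).
move=> y z c1 IH dyz.
case: (boolP ((y == x) && (z == y2) || (y == y2) && (z == x))).
  case/orP => /andP[/eqP Ey /eqP Ez].
    rewrite Ey in c1.
    by move: (ae y1 x); rewrite se exy1 c1 => /(_ isT).
  by rewrite Ez connect0.
move=> H; apply: connect_trans IH (connect1 _).
by move: dyz; rewrite /del_edge => /andP[-> _].
Qed.

Lemma T4 x z : z != x -> exists2 y, e x y & connect (D y x) y z.
Proof.
case: Ht => se ie ce ae zx.
have: z = x \/ exists2 y, e x y & connect (D y x) y z.
  apply: (@connect_ind' _ (e) x (fun z => z = x \/ exists2 y, e x y & connect (D y x) y z)) (ce x z).
    by left.
  move=> y z' _ IH eyz.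
  case: IH => [Ey|[y0 exy0 c]].
    by right; exists z'; [rewrite -Ey | rewrite connect0].
  case: (boolP ((y == y0) && (z' == x) || (y == x) && (z' == y0))).
    case/orP => /andP[/eqP Ey /eqP Ez]; first by left.
    by right; exists y0; rewrite // Ez connect0.
  move=> H; right; exists y0 => //.
  by apply: connect_trans c (connect1 _); rewrite /del_edge eyz H.
by case=> [E|//]; rewrite E eqxx in zx.
Qed.

Lemma T5 u v z : degree e u = 1 -> e u v -> connect (D u v) u z -> z = u.
Proof.
case: Ht => se ie ce ae du euv.
have nb : forall y, e u y -> y = v.
  move: du; rewrite /degree => /eqP /cards1P [y0 E] y euy.
  have : y \in [set y | e u y] by rewrite inE.
  have : v \in [set y | e u y] by rewrite inE.
  by rewrite E !inE => /eqP -> /eqP ->.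
apply: (@connect_ind' _ (D u v) u (fun z => z = u)) => //.
move=> y z' _ -> /andP[euz H].
by move: H; rewrite (nb _ euz) !eqxx.
Qed.

End Tree.

Theorem theorem3 (V : finType) (f : {set V} -> nat) (k : nat) (W : {set V}) :
  connectivity_function f ->
  is_branchwidth f k ->
  (2 * k < f W)%N ->
  exists C1 C2 C3 : {set V},
    [/\ [disjoint C1 & C2], [disjoint C1 & C3], [disjoint C2 & C3],
        C1 :|: C2 :|: C3 = setT &
        forall C : {set V}, C \in [:: C1; C2; C3] ->
          [/\ (2 * f C < f W)%N, (f (C :&: W) < f W)%N & (f (C :&: ~: W) < f W)%N]].
Proof.
move=> [f0 fC fS] [[N [e [L [BD wid]]]] _] hk.
case: BD => Ht deg Linj Lleaf.
have Ht' := Ht; case: Ht' => se ie ce ae.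
pose S u v := edge_side e L u v.
have Sle : forall u v, e u v -> f (S u v) <= k.
  move=> u v euv; rewrite -wid.
  exact: (@leq_bigmax_cond _ (fun p : N * N => e p.1 p.2)
            (fun p => f (edge_side e L p.1 p.2)) (u, v)).
pose big X := (f W <= f (X :&: W)) || (f W <= f (X :&: ~: W)).
have Fbig : forall X, f X <= k -> ~~ (big X && big (~: X)).
  move=> X fX.
  have h1 := fS X W. have h2 := fS X (~: W).
  have h3 := fS (X :&: ~: W) (~: X :&: ~: W).
  have h4 := fS (X :&: W) (~: X :&: W).
  have e1 : f (X :|: W) = f (~: X :&: ~: W) by rewrite fC setCU.
  have e2 : f (X :|: ~: W) = f (~: X :&: W) by rewrite fC setCU setCK.
  have e3 : (X :&: ~: W) :|: (~: X :&: ~: W) = ~: W.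
    by apply/setP => x; rewrite !inE; case: (x \in X); case: (x \in W).
  have e4 : (X :&: ~: W) :&: (~: X :&: ~: W) = set0.
    by apply/setP => x; rewrite !inE; case: (x \in X); case: (x \in W).
  have e5 : (X :&: W) :|: (~: X :&: W) = W.
    by apply/setP => x; rewrite !inE; case: (x \in X); case: (x \in W).
  have e6 : (X :&: W) :&: (~: X :&: W) = set0.
    by apply/setP => x; rewrite !inE; case: (x \in X); case: (x \in W).
  rewrite e1 in h1; rewrite e2 -fC in h2.
  rewrite e3 e4 f0 -fC in h3; rewrite e5 e6 f0 in h4.
  rewrite /big; have := fC X; move: hk fX h1 h2 h3 h4.
  case: (leqP (f W) (f (X :&: W))); case: (leqP (f W) (f (X :&: ~: W)));
  case: (leqP (f W) (f (~: X :&: W))); case: (leqP (f W) (f (~: X :&: ~: W)));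
  move=> *; lia.
pose good C := [/\ (2 * f C < f W)%N, (f (C :&: W) < f W)%N & (f (C :&: ~: W) < f W)%N].
have goodP : forall C, f C <= k -> ~~ big C -> good C.
  move=> C fCk; rewrite /big negb_or -!ltnNge => /andP[a b]; split => //; lia.
have good0 : good set0 by split; rewrite ?set0I f0 //; lia.
have fin : forall C1 C2 C3 : {set V}, [disjoint C1 & C2] -> [disjoint C1 & C3] -> [disjoint C2 & C3] ->
    C1 :|: C2 :|: C3 = setT -> good C1 -> good C2 -> good C3 ->
  exists C1 C2 C3 : {set V},
    [/\ [disjoint C1 & C2], [disjoint C1 & C3], [disjoint C2 & C3],
        C1 :|: C2 :|: C3 = setT &
        forall C : {set V}, C \in [:: C1; C2; C3] ->
          [/\ (2 * f C < f W)%N, (f (C :&: W) < f W)%N & (f (C :&: ~: W) < f W)%N]].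
  move=> C1 C2 C3 d12 d13 d23 U g1 g2 g3; exists C1, C2, C3; split => //.
  by move=> C; rewrite !inE => /or3P [] /eqP ->.
have Fcomp : forall u v, e u v -> S v u = ~: S u v.
  move=> u v euv; apply/setP => x; rewrite !inE.
  have c := @T1 N e Ht u v (L x) euv.
  rewrite (eq_connect (del_edgeC N e v u)).
  case: (boolP (connect (del_edge e u v) u (L x))) => c1 /=.
    apply/negbTE/negP => c2; exact: (@T2 N e Ht u v (L x) euv c1 c2).
  by rewrite (negbTE c1) in c.
have case1 : forall u v, e u v -> ~~ big (S u v) -> ~~ big (S v u) -> exists C1 C2 C3 : {set V},
    [/\ [disjoint C1 & C2], [disjoint C1 & C3], [disjoint C2 & C3],
        C1 :|: C2 :|: C3 = setT &
        forall C : {set V}, C \in [:: C1; C2; C3] ->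
          [/\ (2 * f C < f W)%N, (f (C :&: W) < f W)%N & (f (C :&: ~: W) < f W)%N]].
  move=> u v euv b1 b2; apply: (fin (S u v) (S v u) set0) => //.
  - apply: disj_of => x; rewrite (Fcomp u v euv) !inE. by move=> ->.
  - by apply: disj_of => x; rewrite in_set0.
  - by apply: disj_of => x; rewrite in_set0.
  - by rewrite setU0 (Fcomp u v euv) setUCr.
  - exact: goodP (Sle u v euv) b1.
  - by apply: goodP (Sle v u _) b2; rewrite se.
pose comp u v := [set z | connect (del_edge e u v) u z].
have main : forall n u v, #|comp u v| <= n -> e u v -> big (S u v) -> exists C1 C2 C3 : {set V},
    [/\ [disjoint C1 & C2], [disjoint C1 & C3], [disjoint C2 & C3],
        C1 :|: C2 :|: C3 = setT &
        forall C : {set V}, C \in [:: C1; C2; C3] ->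
          [/\ (2 * f C < f W)%N, (f (C :&: W) < f W)%N & (f (C :&: ~: W) < f W)%N]].
  elim=> [|n IH] u v hc euv bg.
    have : u \in comp u v by rewrite inE connect0.
    by move: hc; rewrite leqn0 cards_eq0 => /eqP ->; rewrite in_set0.
  have du3 : degree e u = 3.
    case: (deg u) => // du1.
    case: (Lleaf u) => /(_ du1) [w Lw] _.
    have Suv : S u v = [set w].
      apply/setP => x; rewrite !inE; apply/idP/eqP.
        move=> c; apply: Linj; rewrite Lw; exact: (@T5 N e Ht u v (L x) du1 euv c).
      by move=> ->; rewrite Lw connect0.
    have hs : forall X : {set V}, [set w] :&: X = [set w] \/ [set w] :&: X = set0.
      move=> X; case: (boolP (w \in X)) => wX; [left|right]; apply/setP => x; rewrite !inE;
      by case: (eqVneq x w) => // ->; rewrite ?wX ?(negbTE wX).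
    have := Sle u v euv; move: bg; rewrite /big Suv.
    by case: (hs W) => ->; case: (hs (~: W)) => ->; rewrite ?f0 => /orP[]; lia.
  pose Nu := [set y | e u y].
  have vN : v \in Nu by rewrite inE.
  have : #|Nu| = 3 := du3.
  rewrite (cardsD1 v) vN add1n => [[/eqP]].
  case/cards2P => a [b [ab Eab]].
  have inNu : forall y, (y \in Nu) = (y == v) || (y \in [set a; b]).
    move=> y; rewrite -Eab in_setD1; case: eqVneq => [->|] //=.
  have aN : a \in Nu :\ v by rewrite Eab !inE eqxx.
  have bN : b \in Nu :\ v by rewrite Eab !inE eqxx orbT.
  move: aN bN; rewrite !in_setD1 !inE => /andP[av eua] /andP[bv eub].
  have lt : forall y, e u y -> y != v -> #|comp y u| < #|comp u v|.
    move=> y euy yv; apply: proper_card; apply/properP; split.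
      apply/subsetP => z; rewrite !inE; exact: (@T3 N e Ht u y v z euy euv yv).
    exists u; rewrite !inE ?connect0 //.
    by apply: ae; rewrite se.
  case: (boolP (big (S a u))) => [ba|nba].
    apply: (IH a u) => //; last by rewrite se.
    by rewrite -ltnS (leq_trans (lt a eua av) hc).
  case: (boolP (big (S b u))) => [bb|nbb].
    apply: (IH b u) => //; last by rewrite se.
    by rewrite -ltnS (leq_trans (lt b eub bv) hc).
  have nbv : ~~ big (S v u).
    by have := Fbig _ (Sle u v euv); rewrite bg /= -(Fcomp u v euv).
  have dis : forall y1 y2, e u y1 -> e u y2 -> y1 != y2 -> [disjoint S y1 u & S y2 u].
    move=> y1 y2 eu1 eu2 ne; apply: disj_of => x; rewrite !inE => c1 c2.
    have c1' := @T3 N e Ht u y1 y2 (L x) eu1 eu2 ne c1.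
    rewrite (eq_connect (del_edgeC N e y2 u)) in c2.
    exact: (@T2 N e Ht u y2 (L x) eu2 c1' c2).
  apply: (fin (S v u) (S a u) (S b u)).
  - by apply: dis; rewrite // eq_sym.
  - by apply: dis; rewrite // eq_sym.
  - exact: dis.
  - apply/setP => x; rewrite in_setT.
    have Lxu : L x != u.
      apply/eqP => E; have := (Lleaf (L x)).2 (ex_intro _ x erefl).
      by rewrite E du3.
    case: (@T4 N e Ht u (L x) Lxu) => y euy c.
    have : y \in Nu by rewrite inE.
    rewrite inNu !inE => /or3P[]/eqP Ey; subst y;
    by rewrite c ?orbT.
  - by apply: goodP; [apply: Sle; rewrite se|].
  - by apply: goodP; [apply: Sle; rewrite se|].
  - by apply: goodP; [apply: Sle; rewrite se|].
have : W != set0 by apply/eqP => W0; move: hk; rewrite W0 f0.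
case/set0Pn => w _.
have : degree e (L w) = 1 by apply/(Lleaf (L w)).2; exists w.
rewrite /degree => /eqP/cards1P [y Ey].
have ey : e (L w) y by have : y \in [set y] := set11 y; rewrite -Ey inE.
case: (boolP (big (S (L w) y))) => b1.
  exact: main _ _ _ (leqnn _) ey b1.
case: (boolP (big (S y (L w)))) => b2.
  by apply: main _ _ _ (leqnn _) _ b2; rewrite se.
exact: case1 _ _ ey b1 b2.
Qed.
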